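(* Let $N$ be the length of the maximal strictly decreasing sequence in $(\Lambda(n;r),\triangleright)$. Then for every $\lambda\in\Lambda(n;r)$, $B^+_k(R_\lambda)=0$ for $k>N$.
   Context: $R$ commutative ring with identity, $n,r$ positive integers. $\Lambda(n;r)$: compositions in $\mathbb{N}_0^n$ with sum $r$; $\nu\triangleright\mu$ means $\nu\ne\mu$ and $\sum_{s\le t}\nu_s\ge\sum_{s\le t}\mu_s$ for all $t$. $\Lambda(n,n;r)$: $n\times n$ nonnegative integer matrices with sum $r$. $S_R(n,r)=\mathrm{End}_{R\Sigma_r}((R^n)^{\otimes r})$ ($\Sigma_r$ permuting tensor positions) has basis $\xi_\omega=\sum_{(i,j)\in\omega}e_{i,j}$, where $e_{i,j}e_k=\delta_{jk}e_i$ on the basis $e_k$ ($k\in\{1,\dots,n\}^r$) and $(i,j)\in\omega$ means $\#\{q:i_q=s,j_q=t\}=\omega_{st}$ for all $s,t$; $\xi_\lambda=\xi_{\mathrm{diag}(\lambda)}$. $\Lambda^s(n,n;r)$: upper triangular $\omega$ with $\sum_{k\le l}(l-k)\omega_{kl}\ge s$. $S^+_R(n,r)$ = span of $\xi_\omega$, $\omega\in\Lambda^0(n,n;r)$; $J_R$ = span of $\xi_\omega$, $\omega\in\Lambda^1(n,n;r)$; $L_{n,r}=\bigoplus_{\lambda\in\Lambda(n;r)}R\xi_\lambda$. $R_\lambda$: the $S^+_R(n,r)$-module $R$ with $\xi_\lambda$ acting as $1$, $\xi_\mu$ ($\mu\neq\lambda$) and $J_R$ acting as $0$. For $k\ge0$,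 $B^+_k(R_\lambda)=S^+_R(n,r)\otimes J_R\otimes\cdots\otimes J_R\otimes R_\lambda$ with $k$ copies of $J_R$, all tensor products over $L_{n,r}$. *)

(* Defs.v *)
From HB Require Import structures.
From mathcomp Require Import all_boot all_order all_algebra.
Set Implicit Arguments. Unset Strict Implicit. Unset Printing Implicit Defensive.
Import Order.TTheory GRing.Theory.
Local Open Scope ring_scope.

Section Schur.
Variables (R : comPzRingType) (n r : nat).

Local Notation Ik := {ffun 'I_r -> 'I_n}.

Definition Comp := {l : {ffun 'I_n -> 'I_r.+1} | (\sum_s (l s : nat) == r)%N}.
Definition Mnr := {w : {ffun 'I_n * 'I_n -> 'I_r.+1} | (\sum_p (w p : nat) == r)%N}.

Definition psum (l : Comp) (t : nat) : nat := (\sum_(s : 'I_n | (s < t)%N) (val l s : nat))%N.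
Definition dom (nu mu : Comp) : bool :=
  (nu != mu) && [forall t : 'I_n, psum mu t.+1 <= psum nu t.+1]%N.

(* elements of S_R(n,r) = End_{R Sigma_r}((R^n)^{(x) r}), as matrices w.r.t.
   the basis e_i, i in I(n,r):  x (i,j) = coefficient of e_i in x(e_j) *)
Local Notation Send := {ffun Ik * Ik -> R}.
Definition mulS (x y : Send) : Send :=
  [ffun p => \sum_(q : Ik) x (p.1, q) * y (q, p.2)].

Definition sclS (k : R) (x : Send) : Send := [ffun p => k * x p].

Definition pairmem (i j : Ik) (w : 'I_n -> 'I_n -> nat) : bool :=
  [forall s : 'I_n, forall t : 'I_n,
     #|[set q : 'I_r | (i q == s) && (j q == t)]| == w s t].
Definition xiw (w : 'I_n -> 'I_n -> nat) : Send :=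
  [ffun p => if pairmem p.1 p.2 w then 1 else 0].
Definition xi (w : Mnr) : Send := xiw (fun s t => val w (s, t)).
Definition xi_comp (l : Comp) : Send := xiw (fun s t => if s == t then (val l s : nat) else 0%N).

Definition inLam (h : nat) (w : Mnr) : bool :=
  [forall s : 'I_n, forall t : 'I_n, (t < s)%N ==> (val w (s, t) == 0 :> nat)] &&
  (h <= \sum_(p : 'I_n * 'I_n | (p.1 <= p.2)%N) ((p.2 - p.1) * val w p))%N.

Definition inSplus (x : Send) : Prop :=
  exists c : Mnr -> R, x = \sum_(w : Mnr | inLam 0 w) sclS (c w) (xi w).
Definition inJ (x : Send) : Prop :=
  exists c : Mnr -> R, x = \sum_(w : Mnr | inLam 1 w) sclS (c w) (xi w).

Definition Lel (c : Comp -> R) : Send := \sum_(l : Comp) sclS (c l) (xi_comp l).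

Definition upd k (x : {ffun 'I_k.+1 -> Send}) (i : 'I_k.+1) (v : Send) :
  {ffun 'I_k.+1 -> Send} := [ffun j => if j == i then v else x j].

Definition slot k (i : 'I_k.+1) (v : Send) : Prop :=
  if i == ord0 then inSplus v else inJ v.
Definition admissible k (x : {ffun 'I_k.+1 -> Send}) : Prop :=
  forall i, slot i (x i).

(* B^+_k(R_lambda) = S^+ (x)_L J (x)_L ... (x)_L J (x)_L R_lambda (k copies of J)
   is zero, stated through the universal property of the iterated tensor
   product over L: every map that is additive in each argument and
   L-balanced between consecutive factors vanishes on all pure tensors.
   On R_lambda, the element Lel c of L acts as multiplication by c lambda. *)
Definition Bplus_zero k (lam : Comp) : Prop :=
  forall (A : zmodType) (f : {ffun 'I_k.+1 -> Send} -> R -> A),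
    (forall x i u a, admissible x -> slot i u ->
        f (upd x i (x i + u)) a = f x a + f (upd x i u) a) ->
    (forall x a b, admissible x -> f x (a + b) = f x a + f x b) ->
    (forall x (i : 'I_k) c a, admissible x ->
        f (upd (upd x (widen_ord (leqnSn k) i) (mulS (x (widen_ord (leqnSn k) i)) (Lel c)))
               (lift ord0 i) (x (lift ord0 i))) a =
        f (upd x (lift ord0 i) (mulS (Lel c) (x (lift ord0 i)))) a) ->
    (forall x c a, admissible x ->
        f (upd x ord_max (mulS (x ord_max) (Lel c))) a = f x (c lam * a)) ->
    forall x a, admissible x -> f x a = 0.

End Schur.

Definition dec_chain n r (s : seq (Comp n r)) : bool := sorted (@dom n r) s.

(* Main.v *)
Require Import Defs.
From HB Require Import structures.
From mathcomp Require Import all_boot all_order all_algebra.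
Set Implicit Arguments. Unset Strict Implicit. Unset Printing Implicit Defensive.
Import Order.TTheory GRing.Theory.

Section Comb.
Variables (n r : nat).
Local Notation Ik := {ffun 'I_r -> 'I_n}.

Lemma card_part (P : pred 'I_r) (h : 'I_r -> 'I_n) :
  #|[set q | P q]| = (\sum_t #|[set q | P q && (h q == t)]|)%N.
Proof.
rewrite -sum1_card (partition_big h xpredT) //=.
apply: eq_bigr => t _; rewrite -sum1_card; apply: eq_bigl => q.
by rewrite !inE.
Qed.

Definition cnt (p : Ik) (s : 'I_n) : nat := #|[set q | p q == s]|.
Definition cntEq (p : Ik) (mu : Comp n r) : bool :=
  [forall s, cnt p s == (val mu s : nat)].

Lemma cnt_le p s : (cnt p s < r.+1)%N.
Proof. by rewrite ltnS /cnt; apply: leq_trans (max_card _) _; rewrite card_ord. Qed.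

Lemma sum_cnt p : (\sum_s cnt p s = r)%N.
Proof.
have := card_part xpredT p; rewrite /= cardsT card_ord => ->.
by apply: eq_bigr => s _.
Qed.

Definition cont (p : Ik) : Comp n r.
exists [ffun s => Ordinal (cnt_le p s)].
apply/eqP; transitivity (\sum_s cnt p s)%N; last exact: sum_cnt.
by apply: eq_bigr => s _; rewrite ffunE.
Defined.

Lemma cntEq_cont p : cntEq p (cont p).
Proof. by apply/forallP => s; rewrite /= ffunE. Qed.

Lemma cntEq_uniq p mu : cntEq p mu -> mu = cont p.
Proof.
move/forallP => H; apply: val_inj; apply/ffunP => s; apply: val_inj.
by rewrite /= ffunE /= (eqP (H s)).
Qed.

Lemma cntEq_inj p mu nu : cntEq p mu -> cntEq p nu -> mu = nu.
Proof. by move=> /cntEq_uniq -> /cntEq_uniq ->. Qed.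

Lemma psum_cnt p mu t : cntEq p mu -> psum mu t = #|[set q | (p q < t)%N]|.
Proof.
move/forallP => H; rewrite /psum (card_part _ p) big_mkcond /=.
apply: eq_bigr => s _; rewrite -(eqP (H s)) /cnt.
case: ifP => st.
  by apply: eq_card => q; rewrite !inE; case: (p q =P s) => [->|]; rewrite ?st ?andbF ?andbT.
apply/esym/eqP; rewrite cards_eq0; apply/eqP/setP => q; rewrite !inE.
by case: (p q =P s) => [->|]; rewrite ?st ?andbF ?andbT.
Qed.


Lemma cntEqE p mu : cntEq p mu = (cont p == mu).
Proof.
apply/idP/eqP => [/cntEq_uniq -> //|<-]; exact: cntEq_cont.
Qed.

Lemma cont_ext (p p' : Ik) : (forall s, cnt p s = cnt p' s) -> cont p = cont p'.
Proof.
move=> H; apply: val_inj; apply/ffunP => s; apply: val_inj; by rewrite /= !ffunE /= H.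
Qed.

Lemma pair_col (i j : Ik) w t : pairmem i j w -> cnt j t = (\sum_s w s t)%N.
Proof.
move=> /forallP H; rewrite /cnt (card_part _ i); apply: eq_bigr => s _.
have /forallP/(_ t)/eqP <- := H s; apply: eq_card => q; by rewrite !inE andbC.
Qed.

Lemma pair_row (i j : Ik) w s : pairmem i j w -> cnt i s = (\sum_t w s t)%N.
Proof.
move=> /forallP H; rewrite /cnt (card_part _ j); apply: eq_bigr => t _.
have /forallP/(_ t)/eqP <- := H s; apply: eq_card => q; by rewrite !inE.
Qed.

Lemma pair_same (i j i' j' : Ik) w : pairmem i j w -> pairmem i' j' w ->
  cont i = cont i' /\ cont j = cont j'.
Proof.
move=> H H'; split; apply: cont_ext => s.
  by rewrite (pair_row s H) (pair_row s H').
by rewrite (pair_col s H) (pair_col s H').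
Qed.

Lemma pair_dom (i j : Ik) (w : Mnr n r) :
  pairmem i j (fun s t => val w (s, t)) -> inLam 1 w -> dom (cont i) (cont j).
Proof.
move=> Hp /andP[/forallP Htri Hsum].
have Hp' := Hp; move/forallP: Hp' => Hq.
have le_ij : forall q, (i q <= j q)%N.
  move=> q; rewrite leqNgt; apply/negP => lt.
  have /forallP/(_ (j q))/eqP := Hq (i q).
  have /forallP/(_ (j q)) := Htri (i q); rewrite lt /= => /eqP ->.
  move/eqP; rewrite cards_eq0 => /eqP/setP/(_ q); by rewrite !inE !eqxx.
have [q0 lt0] : exists q, (i q < j q)%N.
  case: (boolP [exists q, (i q < j q)%N]) => [/existsP //|/existsPn Hn].
  move: Hsum; rewrite big1; first by [].
  move=> p Hp12.
  case: (ltngtP p.1 p.2) Hp12 => // [lt _|eq12 _]; last by rewrite eq12 subnn.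
  have /forallP/(_ p.2)/eqP := Hq p.1.
  rewrite -surjective_pairing => <-.
  apply/eqP; rewrite muln_eq0 cards_eq0; apply/orP; right; apply/eqP/setP => q.
  rewrite !inE; apply/negP => /andP[/eqP e1 /eqP e2].
  have := Hn q; by rewrite e1 e2 lt.
apply/andP; split.
  apply/negP => /eqP E.
  have := psum_cnt (j q0) (cntEq_cont i); rewrite E (psum_cnt (j q0) (cntEq_cont j)).
  move=> Ec; have : [set q | (j q < j q0)%N] \proper [set q | (i q < j q0)%N].
    apply/properP; split.
      apply/subsetP => q; rewrite !inE => H; exact: leq_ltn_trans (le_ij q) H.
    by exists q0; rewrite !inE ?ltnn.
  by move/proper_card; rewrite Ec ltnn.
apply/forallP => t.
rewrite (psum_cnt _ (cntEq_cont i)) (psum_cnt _ (cntEq_cont j)).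
apply: subset_leq_card; apply/subsetP => q; rewrite !inE => H.
exact: leq_ltn_trans (le_ij q) H.
Qed.

End Comb.

Section Mat.
Variables (R : comPzRingType) (n r : nat).
Local Notation Ik := {ffun 'I_r -> 'I_n}.
Local Notation Send := {ffun Ik * Ik -> R}.
Local Open Scope ring_scope.

Definition sel (y : Send) (P : Comp n r -> Comp n r -> bool) : Send :=
  [ffun p => if P (cont p.1) (cont p.2) then y p else 0].

Lemma pairmem_diag (q p : Ik) (mu : Comp n r) :
  pairmem q p (fun s t => if s == t then (val mu s : nat) else 0%N) =
  (q == p) && (cont p == mu).
Proof.
rewrite -cntEqE; apply/idP/andP.
  move/forallP => H.
  have qp : q = p.
    apply/ffunP => q'; apply/eqP; apply/negPn/negP => ne.
    have /forallP/(_ (p q'))/eqP := H (q q'); rewrite (negbTE ne).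
    move/eqP; rewrite cards_eq0 => /eqP/setP/(_ q'); by rewrite !inE !eqxx.
  subst q; split => //; apply/forallP => s.
  have /forallP/(_ s)/eqP := H s; rewrite eqxx => <-.
  by apply/eqP; apply: eq_card => q'; rewrite !inE andbb.
case=> /eqP <- /forallP H; apply/forallP => s; apply/forallP => t.
case: (s =P t) => [<-|ne].
  rewrite -(eqP (H s)) /cnt; apply/eqP; apply: eq_card => q'; by rewrite !inE andbb.
rewrite cards_eq0; apply/eqP/setP => q'; rewrite !inE.
apply/negP => /andP[/eqP e1 /eqP e2]; apply: ne; by rewrite -e1 -e2.
Qed.

Lemma xi_compE (mu : Comp n r) (q p : Ik) :
  xi_comp R mu (q, p) = if (q == p) && (cont p == mu) then 1 else 0.
Proof. by rewrite /xi_comp /xiw ffunE /= pairmem_diag. Qed.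

Lemma mulS_er (y : Send) nu : mulS y (xi_comp R nu) = sel y (fun _ b => b == nu).
Proof.
apply/ffunP => p; rewrite !ffunE (bigD1 p.2) //= big1 => [|q nq].
  by rewrite xi_compE eqxx /= addr0; case: ifP => _; rewrite ?mulr1 ?mulr0 -?surjective_pairing.
by rewrite xi_compE (negbTE nq) mulr0.
Qed.

Lemma mulS_el (y : Send) mu : mulS (xi_comp R mu) y = sel y (fun a _ => a == mu).
Proof.
apply/ffunP => p; rewrite !ffunE (bigD1 p.1) //= big1 => [|q nq].
  by rewrite xi_compE eqxx /= addr0; case: ifP => _; rewrite ?mul1r ?mul0r -?surjective_pairing.
by rewrite xi_compE eq_sym (negbTE nq) mul0r.
Qed.

Lemma sel_sel (y : Send) P Q : sel (sel y P) Q = sel y (fun a b => P a b && Q a b).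
Proof. by apply/ffunP => p; rewrite !ffunE; case: (P _ _); case: (Q _ _). Qed.

Lemma sum_sel (y : Send) : \sum_nu sel y (fun _ b => b == nu) = y.
Proof.
apply/ffunP => p; rewrite sum_ffunE (bigD1 (cont p.2)) //= big1 => [|nu nnu].
  by rewrite ffunE eqxx addr0.
by rewrite ffunE eq_sym (negbTE nnu).
Qed.

Lemma Lel_delta (mu : Comp n r) : Lel (fun l => if l == mu then 1 else 0) = xi_comp R mu.
Proof.
apply/ffunP => p; rewrite /Lel sum_ffunE (bigD1 mu) //= big1 => [|l nl].
  by rewrite ffunE eqxx mul1r addr0.
by rewrite ffunE (negbTE nl) mul0r.
Qed.

Lemma inJ0 : inJ (0 : Send).
Proof.
exists (fun _ => 0); apply/ffunP => p; rewrite sum_ffunE ffunE big1 // => w _.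
by rewrite ffunE mul0r.
Qed.

Lemma inJD (y z : Send) : inJ y -> inJ z -> inJ (y + z).
Proof.
case=> c -> [d ->]; exists (fun w => c w + d w); apply/ffunP => p.
rewrite !ffunE !sum_ffunE -big_split /=; apply: eq_bigr => w _.
by rewrite !ffunE mulrDl.
Qed.

Lemma inJ_sel (y : Send) P : inJ y -> inJ (sel y P).
Proof.
case=> c ->.
exists (fun w : Mnr n r => c w * (if [exists p : Ik * Ik,
    pairmem p.1 p.2 (fun s t => val w (s, t)) && P (cont p.1) (cont p.2)] then 1 else 0)).
apply/ffunP => p; rewrite !ffunE !sum_ffunE; case: ifP => HP.
  apply: eq_bigr => w _; rewrite /sclS /xi /xiw !ffunE.
  case: ifP => Hpm; last by rewrite !mulr0.
  suff -> : [exists p0 : Ik * Ik, pairmem p0.1 p0.2 (fun s t => val w (s, t))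
               && P (cont p0.1) (cont p0.2)] by rewrite !mulr1.
  by apply/existsP; exists p; rewrite Hpm HP.
apply/esym; apply: big1 => w _; rewrite /sclS /xi /xiw !ffunE.
case: ifP => [Hex|_]; last by rewrite mulr0 mul0r.
case: ifP => Hpm; last by rewrite !mulr0.
case/existsP: Hex => p' /andP[Hpm' HP'].
have [e1 e2] := pair_same Hpm Hpm'; by rewrite e1 e2 HP' in HP.
Qed.

Lemma sel_dom_zero (y : Send) (mu nu : Comp n r) : inJ y -> ~~ dom mu nu ->
  sel y (fun a b => (a == mu) && (b == nu)) = 0.
Proof.
case=> c -> nd; apply/ffunP => p; rewrite !ffunE.
case: ifP => // /andP[/eqP e1 /eqP e2]; rewrite sum_ffunE big1 // => w Hw.
rewrite /sclS /xi /xiw !ffunE; case: ifP => Hpm; last by rewrite mulr0.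
by have := pair_dom Hpm Hw; rewrite e1 e2 (negbTE nd).
Qed.

End Mat.

Lemma sorted_rcons2 (T : Type) (e : rel T) (s : seq T) x y :
  sorted e (rcons s x) -> e x y -> sorted e (rcons (rcons s x) y).
Proof.
case: s => [|x0 s] /=; first by move=> _ ->.
by move=> H1 H2; rewrite rcons_path last_rcons H1 H2.
Qed.

From mathcomp Require Import zify.

Section Main.
Variables (R : comPzRingType) (n r k : nat).
Local Notation Ik := {ffun 'I_r -> 'I_n}.
Local Notation Send := {ffun Ik * Ik -> R}.
Local Open Scope ring_scope.
Variables (A : zmodType) (f : {ffun 'I_k.+1 -> Send} -> R -> A).
Hypothesis Hadd : forall x i u a, admissible x -> slot i u ->
        f (upd x i (x i + u)) a = f x a + f (upd x i u) a.
Hypothesis Hbal : forall x (i : 'I_k) c a, admissible x ->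
        f (upd (upd x (widen_ord (leqnSn k) i) (mulS (x (widen_ord (leqnSn k) i)) (Lel c)))
               (lift ord0 i) (x (lift ord0 i))) a =
        f (upd x (lift ord0 i) (mulS (Lel c) (x (lift ord0 i)))) a.

Lemma updE (x : {ffun 'I_k.+1 -> Send}) i u j : upd x i u j = if j == i then u else x j.
Proof. by rewrite ffunE. Qed.

Lemma upd_id (x : {ffun 'I_k.+1 -> Send}) i : upd x i (x i) = x.
Proof. by apply/ffunP => j; rewrite ffunE; case: eqP => // ->. Qed.

Lemma upd_upd (x : {ffun 'I_k.+1 -> Send}) i u v : upd (upd x i u) i v = upd x i v.
Proof. by apply/ffunP => j; rewrite !ffunE; case: eqP. Qed.

Lemma slotJ (i : 'I_k.+1) (u : Send) : i != ord0 -> slot i u = inJ u.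
Proof. by rewrite /slot => /negbTE ->. Qed.

Lemma adm_upd (x : {ffun 'I_k.+1 -> Send}) i u :
  admissible x -> slot i u -> admissible (upd x i u).
Proof. by move=> Hx Hu j; rewrite ffunE; case: eqP => [->|]. Qed.

Lemma f_zero x i a : admissible x -> i != ord0 -> f (upd x i 0) a = 0.
Proof.
move=> Hx Hi; have Hx' : admissible (upd x i 0) by apply: adm_upd; rewrite // slotJ //; exact: inJ0.
have := Hadd a Hx' (_ : slot i 0); rewrite (slotJ _ Hi) => /(_ (@inJ0 R n r)).
rewrite !upd_upd updE eqxx addr0 => E.
by apply: (addrI (f (upd x i 0) a)); rewrite addr0 -E.
Qed.

Lemma inJ_sum (s : seq (Comp n r)) (F : Comp n r -> Send) :
  (forall l, inJ (F l)) -> inJ (\sum_(l <- s) F l).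
Proof.
move=> HF; elim: s => [|l s IH]; first by rewrite big_nil; exact: inJ0.
by rewrite big_cons; apply: inJD.
Qed.

Lemma f_sum_seq x i a (F : Comp n r -> Send) (s0 : seq (Comp n r)) : admissible x -> i != ord0 ->
  (forall l, inJ (F l)) ->
  f (upd x i (\sum_(l <- s0) F l)) a = \sum_(l <- s0) f (upd x i (F l)) a.
Proof.
move=> Hx Hi HF; elim: s0 => [|l s IH].
  by rewrite !big_nil f_zero.
rewrite !big_cons -IH.
have Hx' : admissible (upd x i (F l)) by apply: adm_upd; rewrite // slotJ.
have := Hadd a Hx' (_ : slot i (\sum_(l <- s) F l)).
rewrite (slotJ _ Hi) => /(_ (inJ_sum _ HF)).
by rewrite !upd_upd updE eqxx.
Qed.

Lemma f_sum x i a (F : Comp n r -> Send) : admissible x -> i != ord0 ->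
  (forall l, inJ (F l)) ->
  f (upd x i (\sum_l F l)) a = \sum_l f (upd x i (F l)) a.
Proof. exact: f_sum_seq. Qed.

Lemma sel2 (y : Send) (mu nu : Comp n r) :
  sel (sel y (fun _ b => b == nu)) (fun a _ => a == mu) =
  sel y (fun a b => (a == mu) && (b == nu)).
Proof. by apply/ffunP => p; rewrite !ffunE; case: (cont p.1 == mu); case: (cont p.2 == nu). Qed.

Lemma sel3 (y : Send) (mu nu : Comp n r) :
  sel (sel y (fun a b => (a == mu) && (b == nu))) (fun _ b => b == nu) =
  sel y (fun a b => (a == mu) && (b == nu)).
Proof. by apply/ffunP => p; rewrite !ffunE; case: (cont p.1 == mu); case: (cont p.2 == nu). Qed.

Lemma sel1 (y : Send) (nu : Comp n r) :
  sel (sel y (fun _ b => b == nu)) (fun _ b => b == nu) = sel y (fun _ b => b == nu).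
Proof. by apply/ffunP => p; rewrite !ffunE; case: (cont p.2 == nu). Qed.

Variable (N : nat).
Hypothesis hNmax : forall s : seq (Comp n r), dec_chain s -> (size s <= N)%N.
Hypothesis hk : (N < k)%N.

Lemma claim m : forall (i : 'I_k) x a (mu : Comp n r) s, (k - i <= m)%N ->
  admissible x -> dec_chain (rcons s mu) -> size s = i ->
  x (lift ord0 i) = sel (x (lift ord0 i)) (fun _ b => b == mu) -> f x a = 0.
Proof.
elim: m => [|m IH] i x a mu s Hm Hx Hs Hsz Hw.
  by have := ltn_ord i; lia.
case: (ltnP N (size (rcons s mu))) => HN.
  by have := hNmax Hs; lia.
rewrite size_rcons Hsz in HN.
have hi2 : (i.+1 < k)%N by lia.
pose i2 : 'I_k := Ordinal hi2.
have Hne : lift ord0 i2 != ord0 by rewrite eq_sym; apply: neq_lift.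
have HJ : inJ (x (lift ord0 i2)) by have := Hx (lift ord0 i2); rewrite slotJ.
rewrite -(upd_id x (lift ord0 i2)) -(sum_sel (x (lift ord0 i2))) f_sum //;
  last by move=> l; apply: inJ_sel.
apply: big1 => nu _.
set y := x (lift ord0 i2).
set x2 := upd x (lift ord0 i2) (sel y (fun _ b => b == nu)).
have Hx2 : admissible x2 by apply: adm_upd; rewrite // slotJ //; apply: inJ_sel.
have := Hbal i2 (fun l => if l == mu then 1 else 0) a Hx2.
rewrite Lel_delta mulS_er mulS_el.
have Ew : widen_ord (leqnSn k) i2 = lift ord0 i by apply: val_inj.
have Ex2 : x2 (lift ord0 i) = x (lift ord0 i).
  rewrite /x2 updE ifN //; apply/negP => /eqP /(congr1 val) /=; rewrite /bump /=; lia.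
rewrite Ew Ex2 -Hw -Ex2 !upd_id.
rewrite {2}/x2 updE eqxx upd_upd sel2 => ->.
case Hd: (dom mu nu); last first.
  by rewrite sel_dom_zero ?Hd // f_zero.
apply: (IH i2 _ a nu (rcons s mu)) => //.
- by rewrite /=; lia.
- by apply: adm_upd; rewrite // slotJ //; apply: inJ_sel.
- exact: sorted_rcons2.
- by rewrite size_rcons Hsz.
- by rewrite updE eqxx sel3.
Qed.

End Main.

Unset Implicit Arguments.

Theorem corollary4p5 (R : comPzRingType) (n r : nat) (hn : (0 < n)%N) (hr : (0 < r)%N)
  (N : nat)
  (hNex : exists s : seq (Comp n r), dec_chain s /\ size s = N)
  (hNmax : forall s : seq (Comp n r), dec_chain s -> (size s <= N)%N) :
  forall (lam : Comp n r) (k : nat), (N < k)%N -> Bplus_zero R k lam.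
Proof.
move=> lam k hk A f Hadd Hbil Hbal Hlast x a Hx.
have h0 : (0 < k)%N by lia.
pose i0 : 'I_k := Ordinal h0.
have Hne : lift ord0 i0 != ord0 by rewrite eq_sym; apply: neq_lift.
have HJ : inJ (x (lift ord0 i0)) by have := Hx (lift ord0 i0); rewrite slotJ.
rewrite -(upd_id x (lift ord0 i0)) -(sum_sel (x (lift ord0 i0))) f_sum //;
  last by move=> l; apply: inJ_sel.
apply: big1 => mu _.
apply: (@claim _ _ _ _ _ _ Hadd Hbal _ hNmax hk k i0 _ a mu [::]) => //.
- by rewrite /=; lia.
- by apply: adm_upd; rewrite // slotJ //; apply: inJ_sel.
- by rewrite updE eqxx sel1.
Qed.
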